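(* Let $P_Z$ be a latent distribution and $\tau:\Theta\times\mathcal{Z}\to\mathbb{R}^p$ a simulator, and let $P_\theta$ denote the law of $\tau(\theta,Z)$, $Z\sim P_Z$. Suppose the observed data are $X_i^*=\tau(\theta^*,Z_i^* )$, $i=1,\dots,n$, with $Z_1^*,\dots,Z_n^*$ i.i.d. $P_Z$, and let $\mathbf{Z}_m=(Z_1,\dots,Z_m)$ be i.i.d. $P_Z$, independent of the $Z_i^*$. Assume: (i) there exists $C>0$ with $\|\theta_1-\theta_2\|\le C\,d_{SW}(P_{\theta_1},P_{\theta_2})$ for all $\theta_1,\theta_2\in\Theta$; (ii) for $\mathbf{Z}_k$ i.i.d. $P_Z$ of any size $k$, $\sup_{\theta\in\Theta}d_{SW}(\mathbb{Q}^\theta_k,P_\theta)=O_p(k^{-1/2})$, where $\mathbb{Q}^\theta_k=\frac1k\sum_{j=1}^k\delta_{\tau(\theta,Z_j)}$. Then any $\hat\theta_{m,n}\in\arg\min_{\theta\in\Theta}d_{SW}\big(\mathbb{Q}^\theta_m,\mathbb{P}_n\big)$, where $\mathbb{P}_n=\frac1n\sum_{i=1}^n\delta_{X_i^*}$ and $\mathbb{Q}^\theta_m$ uses $\mathbf{Z}_m$, satisfies $$\|\hat\theta_{m,n}-\theta^*\|=O_p(n^{-1/2}+m^{-1/2}).$$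
   Context: For probability measures $\mu,\nu$ on $\mathbb{R}^p$ with finite first moment, the sliced Wasserstein distance is $d_{SW}(\mu,\nu)=\int_{S^{p-1}}W_1(\mu_\omega,\nu_\omega)\,d\sigma(\omega)$, where $\sigma$ is the uniform probability measure on the unit sphere $S^{p-1}$, $\mu_\omega,\nu_\omega$ are the pushforwards of $\mu,\nu$ under $x\mapsto\omega^Tx$, and $W_1$ is the 1-Wasserstein distance on $\mathbb{R}$. $\delta_x$ is the Dirac mass at $x$. The minimizer is assumed to exist. *)

(* Defs.v *)
From HB Require Import structures.
From mathcomp Require Import all_boot all_order all_algebra.
From mathcomp Require Import all_classical all_reals all_analysis.

Set Implicit Arguments.
Unset Strict Implicit.
Unset Printing Implicit Defensive.

Import Order.TTheory GRing.Theory Num.Theory.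
Import numFieldNormedType.Exports.

Local Open Scope classical_set_scope.
Local Open Scope ring_scope.

Section SlicedWasserstein.
Variable R : realType.

Definition dotp (p : nat) (u v : 'rV[R]_p) : R := \sum_(i < p) u 0 i * v 0 i.
Definition enorm (p : nat) (v : 'rV[R]_p) : R := Num.sqrt (dotp v v).

Definition sphere (p : nat) : set 'rV[R]_p := [set w | enorm w = 1].

Definition BorelRp (p : nat) := g_sigma_algebraType (@open 'rV[R]_p).
Arguments sphere p : clear implicits.

(* sigma is the uniform probability measure on S^{p-1}: a Borel probability
   measure on R^p concentrated on the sphere and invariant under all
   orthogonal maps (this characterizes it uniquely). *)
Definition uniform_on_sphere (p : nat) (sigma : probability (BorelRp p) R) :=
  sigma (~` (sphere p : set (BorelRp p))) = 0%E /\
  forall U : 'M[R]_p, U *m U^T = 1%:M ->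
    forall A : set (BorelRp p), measurable A ->
      sigma ((fun w : BorelRp p => (w : 'rV[R]_p) *m U : BorelRp p) @^-1` A) = sigma A.

(* Probability measures on R^p are given as set functions; for such a
   mu, the CDF of the projection mu_w at t is mu {x | w^T x <= t}. *)
(* 1-Wasserstein distance on R between the projections mu_w and nu_w,
   W_1(mu_w, nu_w) = \int_R |F_{mu_w}(t) - F_{nu_w}(t)| dt. *)
Definition W1_proj (p : nat) (mu nu : set 'rV[R]_p -> \bar R) (w : 'rV[R]_p)
  : \bar R :=
  (\int[@lebesgue_measure R]_(t in [set: R])
     `| mu [set x | (dotp w x <= t)%R] - nu [set x | (dotp w x <= t)%R] |)%E.

Definition dSW (p : nat) (sigma : probability (BorelRp p) R)
  (mu nu : set 'rV[R]_p -> \bar R) : \bar R :=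
  (\int[sigma]_(w in (sphere p : set (BorelRp p))) W1_proj mu nu w)%E.

Definition empirical (p : nat) (xs : nat -> 'rV[R]_p) (k : nat)
  : set 'rV[R]_p -> \bar R :=
  fun A => ((k%:R)^-1 * \sum_(j < k) \1_A (xs j))%:E.

Definition law_of (dZ : measure_display) (Zt : measurableType dZ)
  (PZ : probability Zt R) (p : nat) (f : Zt -> 'rV[R]_p)
  : set 'rV[R]_p -> \bar R :=
  fun A => PZ (f @^-1` A).

Definition outer_le (dO : measure_display) (Omega : measurableType dO)
  (P : probability Omega R) (E : set Omega) (eps : R) :=
  exists A : set Omega, measurable A /\ E `<=` A /\ (P A <= eps%:E)%E.

(* X_k = O_p(r_k) as k -> oo (outer-probability version, nonnegative X). *)
Definition bigOp1 (dO : measure_display) (Omega : measurableType dO)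
  (P : probability Omega R) (X : nat -> Omega -> \bar R) (r : nat -> R) :=
  forall eps : R, 0 < eps -> exists M : R, exists N : nat,
    forall k, (N <= k)%N -> outer_le P [set w | ((M * r k)%:E < X k w)%E] eps.

Definition bigOp2 (dO : measure_display) (Omega : measurableType dO)
  (P : probability Omega R) (Y : nat -> nat -> Omega -> R)
  (r : nat -> nat -> R) :=
  forall eps : R, 0 < eps -> exists M : R, exists N : nat,
    forall m n, (N <= m)%N -> (N <= n)%N ->
      outer_le P [set w | M * r m n < Y m n w] eps.

Definition mutually_independent (dO : measure_display) (Omega : measurableType dO)
  (P : probability Omega R) (I : eqType) (dZ : measure_display)
  (Zt : measurableType dZ) (X : I -> Omega -> Zt) :=
  forall s : seq I, uniq s -> forall A : I -> set Zt, (forall i, measurable (A i)) ->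
    P (\bigcap_(i in [set` s]) (X i @^-1` A i)) =
    (\big[*%E/1%E]_(i <- s) P (X i @^-1` A i))%E.

Definition has_law (dO : measure_display) (Omega : measurableType dO)
  (P : probability Omega R) (I : Type) (dZ : measure_display)
  (Zt : measurableType dZ) (PZ : probability Zt R) (X : I -> Omega -> Zt) :=
  forall i, measurable_fun setT (X i) /\
    forall A, measurable A -> P (X i @^-1` A) = PZ A.

Definition iid_seq (dO : measure_display) (Omega : measurableType dO)
  (P : probability Omega R) (dZ : measure_display)
  (Zt : measurableType dZ) (PZ : probability Zt R) (Y : nat -> Omega -> Zt) :=
  has_law P PZ Y /\ mutually_independent P Y.

Definition inv_sqrt (k : nat) : R := (Num.sqrt (k%:R))^-1.

End SlicedWasserstein.

(* Main.v *)
Require Import Defs.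
From HB Require Import structures.
From mathcomp Require Import all_boot all_order all_algebra.
From mathcomp Require Import all_classical all_reals all_analysis.
From mathcomp Require Import measurable_realfun lra.
Import Order.TTheory GRing.Theory Num.Theory.
Import numFieldNormedType.Exports.
Local Open Scope classical_set_scope.
Local Open Scope ring_scope.

Section H.
Variable R : realType.
Variable p : nat.
Lemma cont_meas (f : 'rV[R]_p -> R) : continuous f ->
  measurable_fun setT (f : BorelRp R p -> R).
Proof.
move=> /continuousP cf; apply: (measurability _ (RGenOpens.measurableE R)).
move=> _ [_ [a [b ->] <-]]; rewrite setTI.
apply: sub_sigma_algebra. exact/cf/interval_open.
Qed.
Lemma coord_meas i : measurable_fun setT (fun w : BorelRp R p => w ord0 i : R).
Proof. apply: cont_meas; exact: coord_continuous. Qed.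

Lemma dotp_meas d (T : measurableType d) (f g : T -> BorelRp R p) :
  measurable_fun setT f -> measurable_fun setT g ->
  measurable_fun setT (fun x => dotp (f x : 'rV_p) (g x : 'rV_p)).
Proof.
move=> mf mg; rewrite /dotp.
apply: measurable_sum => i; apply: measurable_funM.
  exact: measurableT_comp (coord_meas i) mf.
exact: measurableT_comp (coord_meas i) mg.
Qed.

Lemma sphere_meas : measurable (@sphere R p : set (BorelRp R p)).
Proof.
have me : measurable_fun setT (fun w : BorelRp R p => enorm (w : 'rV_p)).
  apply: measurableT_comp (continuous_measurable_fun (@sqrt_continuous R)) _.
  exact: dotp_meas.
have := me measurableT _ (measurable_set1 (1:R)).
by rewrite setTI.
Qed.

Lemma halfspace_meas w t :
  measurable ([set x | dotp w x <= t] : set (BorelRp R p)).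
Proof.
have me : measurable_fun setT (fun x : BorelRp R p => dotp w (x : 'rV_p)).
  by apply: dotp_meas => //; exact: measurable_cst.
have := me measurableT _ (measurable_itv `]-oo, t]).
rewrite setTI; congr measurable; apply/seteqP; split => x /=;
  by rewrite in_itv /=.
Qed.


Definition good (mu : set 'rV[R]_p -> \bar R) :=
  exists F : (BorelRp R p * R)%type -> R, measurable_fun setT F /\
    forall w t, mu [set x | dotp w x <= t] = (F (w, t))%:E.

Lemma W1E {mu nu : set 'rV[R]_p -> \bar R} {F G : (BorelRp R p * R)%type -> R} :
  (forall w t, mu [set x | dotp w x <= t] = (F (w, t))%:E) ->
  (forall w t, nu [set x | dotp w x <= t] = (G (w, t))%:E) ->
  forall w, W1_proj mu nu w =
    (\int[@lebesgue_measure R]_(t in [set: R]) (`|F (w, t) - G (w, t)|)%:E)%E.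
Proof.
move=> HF HG w; rewrite /W1_proj; apply: eq_integral => t _.
by rewrite HF HG -EFinB abse_EFin.
Qed.

Lemma good_absmeas {F G : (BorelRp R p * R)%type -> R} :
  measurable_fun setT F -> measurable_fun setT G ->
  measurable_fun setT (fun q => (`|F q - G q|)%:E).
Proof.
move=> mF mG; apply/measurable_EFinP.
apply: (measurableT_comp (@normr_measurable R setT)).
exact: measurable_funB.
Qed.

Lemma W1_meas {mu nu} : good mu -> good nu ->
  measurable_fun setT (fun w : BorelRp R p => W1_proj mu nu w).
Proof.
move=> [F [mF HF]] [G [mG HG]].
rewrite (_ : (fun w => _) = fubini_F (@lebesgue_measure R)
   (fun q => (`|F q - G q|)%:E)); last first.
  by apply/funext => w; rewrite (W1E HF HG).
apply: measurable_fun_fubini_tonelli_F; first exact: good_absmeas.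
by move=> q; rewrite lee_fin.
Qed.

Lemma W1_ge0 (mu nu : set 'rV[R]_p -> \bar R) w : (0 <= W1_proj mu nu w)%E.
Proof. by apply: integral_ge0 => t _; exact: abse_ge0. Qed.

Lemma W1_tri {mu nu rho} : good mu -> good nu -> good rho -> forall w,
  (W1_proj mu rho w <= W1_proj mu nu w + W1_proj nu rho w)%E.
Proof.
move=> [F [mF HF]] [G [mG HG]] [H [mH HH]] w.
rewrite (W1E HF HH) (W1E HF HG) (W1E HG HH).
have ms : forall A B : (BorelRp R p * R)%type -> R, measurable_fun setT A ->
   measurable_fun setT B ->
   measurable_fun setT (fun t : R => (`|A (w, t) - B (w, t)|)%:E).
  move=> A B mA mB.
  have h2 := (measurableT_comp (good_absmeas mA mB) (@pair1_measurable _ _ (BorelRp R p) R w)).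
  exact: h2.
rewrite -ge0_integralD //; last first.
- exact: ms.
- exact: ms.
apply: ge0_le_integral => //.
all: try exact: ms.
- by apply: emeasurable_funD; [exact: (ms F G)|exact: (ms G H)].
- by move=> t _; rewrite -EFinD lee_fin; exact: ler_distD.
Qed.


Lemma dSW_tri (sigma : probability (BorelRp R p) R) mu nu rho :
  good mu -> good nu -> good rho ->
  (dSW sigma mu rho <= dSW sigma mu nu + dSW sigma nu rho)%E.
Proof.
move=> gm gn gr; rewrite /dSW.
have ms := @sphere_meas.
have m1 := measurable_funS measurableT (@subsetT _ _) (W1_meas gm gn).
have m2 := measurable_funS measurableT (@subsetT _ _) (W1_meas gn gr).
rewrite -(ge0_integralD _ (ms) _ (m1 _) _ (m2 _)); try by move=> w _; exact: W1_ge0.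
have m3 := measurable_funS measurableT (@subsetT _ _) (W1_meas gm gr).
apply: ge0_le_integral => //.
- by move=> w _; exact: W1_ge0.
- by apply: emeasurable_funD; [exact: (m1 _)|exact: (m2 _)].
- by move=> w _; exact: W1_tri.
Qed.

Lemma dSW_sym (sigma : probability (BorelRp R p) R) mu nu :
  good mu -> good nu -> dSW sigma mu nu = dSW sigma nu mu.
Proof.
move=> [F [mF HF]] [G [mG HG]]; rewrite /dSW; apply: eq_integral => w _.
rewrite (W1E HF HG) (W1E HG HF); apply: eq_integral => t _.
by rewrite distrC.
Qed.

Lemma dSW_ge0 (sigma : probability (BorelRp R p) R) (mu nu : set 'rV[R]_p -> \bar R) :
  (0 <= dSW sigma mu nu)%E.
Proof. by apply: integral_ge0 => w _; exact: W1_ge0. Qed.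

Lemma good_emp (xs : nat -> 'rV[R]_p) k : good (empirical xs k).
Proof.
pose S j := [set q : (BorelRp R p * R)%type | dotp (q.1 : 'rV_p) (xs j) <= q.2].
have mS : forall j, measurable (S j).
  move=> j.
  have mf : measurable_fun setT (fun q : (BorelRp R p * R)%type => dotp (q.1 : 'rV_p) (xs j)).
    apply: (@dotp_meas _ _ fst (fun=> xs j)); [exact: measurable_fst|exact: measurable_cst].
  have h := measurable_fun_ler mf (@measurable_snd _ _ (BorelRp R p) R).
  have := h measurableT [set true] ltac:(by []). 
  by rewrite setTI; congr measurable; apply/seteqP; split => q /=.
exists (fun q => (k%:R)^-1 * \sum_(j < k) \1_(S j) q).
split.
  apply: measurable_funM; first exact: measurable_cst.
  by apply: measurable_sum => j; exact: measurable_indic.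
move=> w t; rewrite /empirical; congr (_%:E); congr (_ * _).

Qed.


Lemma good_law (dZ : measure_display) (Zt : measurableType dZ) (PZ : probability Zt R)
  (f : Zt -> 'rV[R]_p) : measurable_fun setT (f : Zt -> BorelRp R p) ->
  good (law_of PZ f).
Proof.
move=> mf.
pose E := [set qz : ((BorelRp R p * R) * Zt)%type |
  dotp (qz.1.1 : 'rV_p) (f qz.2) <= qz.1.2].
have mE : measurable E.
  have mg : measurable_fun setT (fun qz : ((BorelRp R p * R) * Zt)%type =>
     dotp (qz.1.1 : 'rV_p) (f qz.2)).
    apply: (@dotp_meas _ _ (fun qz => qz.1.1) (fun qz => f qz.2)).
      exact: measurableT_comp measurable_fst measurable_fst.
    exact: measurableT_comp mf measurable_snd.
  have mh : measurable_fun setT (fun qz : ((BorelRp R p * R) * Zt)%type => qz.1.2).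
    exact: measurableT_comp measurable_snd measurable_fst.
  have h := measurable_fun_ler mg mh.
  have := h measurableT [set true] ltac:(by []).
  by rewrite setTI; congr measurable; apply/seteqP; split => q /=.
exists (fun q => fine (PZ (xsection E q))).
split.
  apply: measurableT_comp; first exact: fine_measurable.
  exact: measurable_fun_xsection.
move=> w t; rewrite /law_of.
have -> : xsection E (w, t) = f @^-1` [set x | dotp w x <= t].
  by apply/seteqP; split => z /=; rewrite /xsection /= inE.
rewrite fineK //; apply: fin_num_measure.
have := mf measurableT _ (halfspace_meas w t).
by rewrite setTI.
Qed.

End H.
Arguments good {R p}.
Arguments dSW_tri {R p} sigma {mu nu rho}.
Arguments dSW_sym {R p} sigma {mu nu}.
Arguments dSW_ge0 {R p}.
Arguments good_emp {R p}.
Arguments good_law {R p dZ Zt} PZ {f}.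

Lemma indep_inl (R : realType) (dO : measure_display) (Omega : measurableType dO)
  (P : probability Omega R) (dZ : measure_display) (Zt : measurableType dZ)
  (Zs Zstar : nat -> Omega -> Zt) :
  mutually_independent P
    (fun i : nat + nat => match i with inl j => Zs j | inr j => Zstar j end) ->
  mutually_independent P Zs.
Proof.
move=> H s us A mA.
have := H (map inl s) _ (fun i => match i with inl j => A j | inr _ => setT end) _.
rewrite big_map; move=> <- //.
- congr (P _); apply/seteqP; split => x /= Hx i.
    case: i => [j|j] //= si; apply: Hx; move: si => /=.
    by rewrite mem_map // => ? ? [].
  by move=> si; apply: (Hx (inl i)) => /=; rewrite mem_map // => ? ? [].
- by rewrite map_inj_uniq // => ? ? [].
- by case.
Qed.

Lemma indep_inr (R : realType) (dO : measure_display) (Omega : measurableType dO)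
  (P : probability Omega R) (dZ : measure_display) (Zt : measurableType dZ)
  (Zs Zstar : nat -> Omega -> Zt) :
  mutually_independent P
    (fun i : nat + nat => match i with inl j => Zs j | inr j => Zstar j end) ->
  mutually_independent P Zstar.
Proof.
move=> H s us A mA.
have := H (map inr s) _ (fun i => match i with inr j => A j | inl _ => setT end) _.
rewrite big_map; move=> <- //.
- congr (P _); apply/seteqP; split => x /= Hx i.
    case: i => [j|j] //= si; apply: Hx; move: si => /=.
    by rewrite mem_map // => ? ? [].
  by move=> si; apply: (Hx (inr i)) => /=; rewrite mem_map // => ? ? [].
- by rewrite map_inj_uniq // => ? ? [].
- by case.
Qed.
Theorem theorem2 (R : realType) (d p : nat)
  (dZ : measure_display) (Zt : measurableType dZ) (PZ : probability Zt R)
  (Theta : set 'rV[R]_d) (tau : 'rV[R]_d -> Zt -> 'rV[R]_p)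
  (sigma : probability (BorelRp R p) R)
  (dO : measure_display) (Omega : measurableType dO) (P : probability Omega R)
  (Zs Zstar : nat -> Omega -> Zt) (theta_star : 'rV[R]_d)
  (theta_hat : nat -> nat -> Omega -> 'rV[R]_d) :
  (* sigma is the uniform probability measure on S^{p-1} *)
  uniform_on_sphere sigma ->
  (* the simulator is measurable and each P_theta has finite first moment *)
  (forall th, Theta th -> measurable_fun setT (tau th : Zt -> BorelRp R p)) ->
  (forall th, Theta th -> PZ.-integrable setT (fun z => (enorm (tau th z))%:E)) ->
  Theta theta_star ->
  (* Z_1, Z_2, ... and Z*_1, Z*_2, ... are all independent with law P_Z *)
  has_law P PZ Zs -> has_law P PZ Zstar ->
  mutually_independent P
    (fun i : nat + nat => match i with inl j => Zs j | inr j => Zstar j end) ->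
  (* assumption (i) *)
  (exists C : R, 0 < C /\ forall th1 th2, Theta th1 -> Theta th2 ->
     ((enorm (th1 - th2))%:E <=
        C%:E * dSW sigma (law_of PZ (tau th1)) (law_of PZ (tau th2)))%E) ->
  (* assumption (ii) *)
  (forall Y : nat -> Omega -> Zt, iid_seq P PZ Y ->
     bigOp1 P
       (fun k w => ereal_sup
          [set dSW sigma (empirical (fun j => tau th (Y j w)) k) (law_of PZ (tau th))
          | th in Theta])
       (@inv_sqrt R)) ->
  (* theta_hat m n is a minimizer of theta |-> d_SW(Q^theta_m, P_n) over Theta *)
  (forall m n w, (0 < m)%N -> (0 < n)%N ->
     Theta (theta_hat m n w) /\
     forall th, Theta th ->
       (dSW sigma (empirical (fun j => tau (theta_hat m n w) (Zs j w)) m)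
                  (empirical (fun i => tau theta_star (Zstar i w)) n)
        <= dSW sigma (empirical (fun j => tau th (Zs j w)) m)
                     (empirical (fun i => tau theta_star (Zstar i w)) n))%E) ->
  (* conclusion: ||theta_hat_{m,n} - theta*|| = O_p(n^{-1/2} + m^{-1/2}) *)
  bigOp2 P (fun m n w => enorm (theta_hat m n w - theta_star))
    (fun m n => inv_sqrt R n + inv_sqrt R m).
Proof.
move=> Hsig Hmeas Hint Hts HZs HZst Hind [C [C0 HC]] Hii Hmin.
have iidZs : iid_seq P PZ Zs := conj HZs (@indep_inl _ _ _ _ _ _ _ _ Hind).
have iidZst : iid_seq P PZ Zstar := conj HZst (@indep_inr _ _ _ _ _ _ _ _ Hind).
move=> eps eps0.
have e2 : 0 < eps / 2 by rewrite divr_gt0.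
have [M1 [N1 H1]] := Hii Zs iidZs (eps / 2) e2.
have [M2 [N2 H2]] := Hii Zstar iidZst (eps / 2) e2.
pose M' := Num.max (Num.max M1 M2) 0.
have M'0 : 0 <= M' by rewrite le_max lexx orbT.
have M1M' : M1 <= M' by rewrite le_max le_max lexx.
have M2M' : M2 <= M' by rewrite le_max le_max lexx orbT.
have r0 : forall k, 0 <= inv_sqrt R k by move=> k; rewrite /inv_sqrt invr_ge0 sqrtr_ge0.
exists (C * 2 * M'), (maxn (maxn N1 N2) 1).
move=> m n Hm Hn.
have Hm1 : (N1 <= m)%N by move: Hm; rewrite !geq_max => /andP[/andP[]].
have Hn2 : (N2 <= n)%N by move: Hn; rewrite !geq_max => /andP[/andP[]].
have m0 : (0 < m)%N by move: Hm; rewrite !geq_max => /andP[_].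
have n0 : (0 < n)%N by move: Hn; rewrite !geq_max => /andP[_].
have [A1 [mA1 [sA1 PA1]]] := H1 m Hm1.
have [A2 [mA2 [sA2 PA2]]] := H2 n Hn2.
exists (A1 `|` A2); split; first exact: measurableU.
split; last first.
  apply: (le_trans (measureU2 _ mA1 mA2)).
  by rewrite [X in (_ <= X%:E)%E](splitr eps) EFinD leeD.
move=> w /= Hw.
have [a1|na1] := pselect (A1 w); first by left.
have [a2|na2] := pselect (A2 w); first by right.
exfalso; move: Hw; apply/negP; rewrite -leNgt.
have [Thh Hminw] := Hmin m n w m0 n0.
set th := theta_hat m n w.
have B1 : forall t, Theta t ->
    (dSW sigma (empirical (fun j => tau t (Zs j w)) m) (law_of PZ (tau t))
     <= (M1 * inv_sqrt R m)%:E)%E.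
  move=> t Tt; apply: (@le_trans _ _ (ereal_sup [set dSW sigma (empirical (fun j => tau th0 (Zs j w)) m) (law_of PZ (tau th0)) | th0 in Theta])).
    by apply: ereal_sup_ubound; exists t.
  rewrite leNgt; apply/negP => h; apply: na1; exact: sA1.
have B2 : (dSW sigma (empirical (fun j => tau theta_star (Zstar j w)) n)
            (law_of PZ (tau theta_star)) <= (M2 * inv_sqrt R n)%:E)%E.
  apply: (@le_trans _ _ (ereal_sup [set dSW sigma (empirical (fun j => tau th0 (Zstar j w)) n) (law_of PZ (tau th0)) | th0 in Theta])).
    by apply: ereal_sup_ubound; exists theta_star.
  rewrite leNgt; apply/negP => h; apply: na2; exact: sA2.
set a := law_of PZ (tau th).
set b := law_of PZ (tau theta_star).
set Q := empirical (fun j => tau th (Zs j w)) m.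
set Qs := empirical (fun j => tau theta_star (Zs j w)) m.
set Pn := empirical (fun i => tau theta_star (Zstar i w)) n.
have ga : good a by apply: good_law; exact: Hmeas.
have gb : good b by apply: good_law; exact: Hmeas.
have gQ : good Q by exact: good_emp.
have gQs : good Qs by exact: good_emp.
have gPn : good Pn by exact: good_emp.
have key : (dSW sigma a b <=
   ((M1 * inv_sqrt R m + (M1 * inv_sqrt R m + M2 * inv_sqrt R n + M2 * inv_sqrt R n)))%:E)%E.
  apply: le_trans (dSW_tri sigma ga gQ gb) _.
  rewrite EFinD; apply: leeD.
    by rewrite (dSW_sym _ ga gQ); exact: B1.
  apply: le_trans (dSW_tri sigma gQ gPn gb) _.
  rewrite !EFinD; apply: leeD; last exact: B2.
  apply: le_trans (Hminw theta_star Hts) _.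
  apply: le_trans (dSW_tri sigma gQs gb gPn) _.
  apply: leeD; first exact: B1.
  by rewrite (dSW_sym _ gb gPn).
have := HC th theta_star Thh Hts.
move=> /le_trans /(_ (lee_pmul (lee_tofin (ltW C0)) (dSW_ge0 _ _ _) (lexx _) key)).
rewrite -EFinM lee_fin => h; apply: le_trans h _.
rewrite -!mulrA; apply: ler_wpM2l; first exact: ltW C0.
rewrite mulrDr.
rewrite mulrDr.
have h1 : M1 * inv_sqrt R m <= M' * inv_sqrt R m by rewrite ler_wpM2r.
have h2 : M2 * inv_sqrt R n <= M' * inv_sqrt R n by rewrite ler_wpM2r.
lra.
Qed.
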